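(* Let $P:(N,h)\to(B,\langle\cdot,\cdot\rangle)$ be a strongly horizontally conformal map. If $k>0$ is an integer with $k+\mathrm{rk}\,P-\dim N\ge 1$, then $P$ is $k$-wide.
   Context: $P$ is strongly horizontally conformal if $P$ is a submersion and there is a smooth $\psi$ with $e^{2\psi}\ge c>0$ and $\langle dP(X),dP(Y)\rangle=e^{2\psi}h(X,Y)$ for all $X,Y$ in the horizontal distribution $(\ker dP)^\perp$. $P$ is $k$-wide if there is a constant $c'>0$ such that $\sum_{i=1}^k\langle dP(w_i),dP(w_i)\rangle\ge c'$ for every orthonormal $k$-frame $w_1,\dots,w_k$ of $TN$. *)

(* Defs.v *)
From HB Require Import structures.
From mathcomp Require Import all_boot all_order all_algebra.
From mathcomp Require Import all_classical all_reals all_analysis.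
Set Implicit Arguments. Unset Strict Implicit. Unset Printing Implicit Defensive.
Import Order.TTheory GRing.Theory Num.Theory.
Local Open Scope ring_scope.

(* Pointwise model of a map P : (N,h) -> (B,g) between Riemannian manifolds:
   at each point x : N, the tangent space T_xN is identified with 'rV_n
   (n = dim N) and T_{P x}B with 'rV_m (m = dim B); tangent vectors are
   row vectors, the metric h x (resp. g y) is represented by its symmetric
   positive definite Gram matrix, and dP x : 'M_(n,m) is the differential
   of P at x, acting by v |-> v *m dP x. *)

Definition ip (R : realType) (d : nat) (G : 'M[R]_d) (u v : 'rV[R]_d) : R :=
  (u *m G *m v^T) ord0 ord0.

Definition metric_mx (R : realType) (d : nat) (G : 'M[R]_d) : Prop :=
  G^T = G /\ forall v : 'rV[R]_d, v != 0 -> 0 < ip G v v.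

Definition horizontal (R : realType) (n m : nat) (h : 'M[R]_n) (L : 'M[R]_(n, m))
  (v : 'rV[R]_n) : Prop :=
  forall u : 'rV[R]_n, u *m L = 0 -> ip h u v = 0.

Definition strongly_horizontally_conformal (R : realType) (N B : Type) (n m : nat)
  (P : N -> B) (dP : N -> 'M[R]_(n, m)) (h : N -> 'M[R]_n) (g : B -> 'M[R]_m) : Prop :=
  (forall x, \rank (dP x) = m) /\
  exists psi : N -> R, exists c : R, 0 < c /\
    (forall x, c <= expR (2 * psi x)) /\
    (forall x (X Y : 'rV[R]_n), horizontal (h x) (dP x) X -> horizontal (h x) (dP x) Y ->
       ip (g (P x)) (X *m dP x) (Y *m dP x) = expR (2 * psi x) * ip (h x) X Y).

Definition orthonormal_frame (R : realType) (n k : nat) (hx : 'M[R]_n)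
  (w : 'I_k -> 'rV[R]_n) : Prop :=
  forall i j : 'I_k, ip hx (w i) (w j) = (i == j)%:R.

Definition k_wide (R : realType) (N B : Type) (n m : nat) (k : nat)
  (P : N -> B) (dP : N -> 'M[R]_(n, m)) (h : N -> 'M[R]_n) (g : B -> 'M[R]_m) : Prop :=
  exists c' : R, 0 < c' /\
    forall x (w : 'I_k -> 'rV[R]_n), orthonormal_frame (h x) w ->
      c' <= \sum_(i < k) ip (g (P x)) (w i *m dP x) (w i *m dP x).

(* Main.v *)
Require Import Defs.
From HB Require Import structures.
From mathcomp Require Import all_boot all_order all_algebra.
From mathcomp Require Import all_classical all_reals all_analysis.
From mathcomp Require Import lra zify.
From Stdlib Require Import Lia.
Import Order.TTheory GRing.Theory Num.Theory.
Local Open Scope ring_scope.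
Set Implicit Arguments. Unset Strict Implicit. Unset Printing Implicit Defensive.

Section Core.
Variable R : realType.

Lemma ip_entry n p q (h : 'M[R]_n) (A : 'M[R]_(p, n)) (C : 'M[R]_(q, n)) i j :
  (A *m h *m C^T) i j = ip h (row i A) (row j C).
Proof.
have -> : (A *m h *m C^T) i j = (row i (A *m h *m C^T)) ord0 j by rewrite [RHS]mxE.
rewrite !row_mul /ip.
have -> : (row i A *m h *m C^T) ord0 j = (col j (row i A *m h *m C^T)) ord0 ord0 by rewrite [RHS]mxE.
by rewrite tr_row colE -mulmxA -colE.
Qed.

Lemma ip_sym n (h : 'M[R]_n) u v : h^T = h -> ip h u v = ip h v u.
Proof.
move=> hs; rewrite /ip.
have -> : (u *m h *m v^T) ord0 ord0 = ((u *m h *m v^T)^T) ord0 ord0 by rewrite [RHS]mxE.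
by rewrite !trmx_mul trmxK hs mulmxA.
Qed.

Lemma ip_ge0 n (h : 'M[R]_n) v : metric_mx h -> 0 <= ip h v v.
Proof.
move=> [_ hp]; have [->|v0] := eqVneq v 0.
  by rewrite /ip !mul0mx mxE.
exact: ltW (hp _ v0).
Qed.

Lemma ip_eq0 n (h : 'M[R]_n) v : metric_mx h -> ip h v v = 0 -> v = 0.
Proof.
move=> [_ hp] e; apply/eqP; apply/negP=> /negP v0.
by have := hp _ v0; rewrite e ltxx.
Qed.

Lemma ip_trace n p (h : 'M[R]_n) (A : 'M[R]_(p, n)) :
  \tr (A *m h *m A^T) = \sum_i ip h (row i A) (row i A).
Proof. by apply: eq_bigr => i _; rewrite ip_entry. Qed.


Lemma tr11 (A : 'M[R]_1) : \tr A = A ord0 ord0.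
Proof. by rewrite /mxtrace big_ord1. Qed.

Lemma core n m k (h : 'M[R]_n) (G : 'M[R]_m) (L : 'M[R]_(n, m)) (lam : R)
  (w : 'I_k -> 'rV[R]_n) :
  metric_mx h -> \rank L = m -> (n < k + m)%N -> 0 <= lam ->
  (forall X Y, horizontal h L X -> horizontal h L Y ->
     ip G (X *m L) (Y *m L) = lam * ip h X Y) ->
  orthonormal_frame h w ->
  lam <= \sum_i ip G (w i *m L) (w i *m L).
Proof.
move=> hm rL nk lam0 conf orth.
have hs := hm.1.
set K := kermx L.
set Hm := kermx (h *m K^T).
have horH : forall v : 'rV[R]_n, (v <= Hm)%MS -> horizontal h L v.
  move=> v; rewrite sub_kermx => /eqP e u uL.
  have : (u <= K)%MS by rewrite sub_kermx uL.
  case/submxP => y ->.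
  have e2 : K *m (h *m v^T) = 0.
    have := congr1 trmx e; rewrite trmx_mul (trmx_mul h (K^T)) trmxK hs trmx0.
    by rewrite -mulmxA.
  by rewrite /ip -(mulmxA (y *m K)) -(mulmxA y) e2 mulmx0 mxE.
have kerL : forall v : 'rV[R]_n, (v <= K)%MS -> v *m L = 0.
  by move=> v vK; apply/eqP; rewrite -sub_kermx.
have zero_of : forall v : 'rV[R]_n, (v <= K)%MS -> (v <= Hm)%MS -> v = 0.
  move=> v vK vH; apply: (ip_eq0 hm); exact: (horH v vH v (kerL v vK)).
have cap0 : (K :&: Hm)%MS = 0.
  apply/eqP; rewrite -submx0; apply/row_subP => i; rewrite submx0; apply/eqP.
  apply: zero_of.
    exact: submx_trans (row_sub i _) (capmxSl _ _).
  exact: submx_trans (row_sub i _) (capmxSr _ _).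
have cap0' : (Hm :&: K)%MS = 0 by rewrite capmxC.
have hfree : row_free h.
  rewrite -kermx_eq0 -submx0; apply/row_subP => i; rewrite submx0; apply/eqP.
  apply: (ip_eq0 hm); rewrite /ip.
  have := row_sub i (kermx h); rewrite sub_kermx => /eqP ->.
  by rewrite mul0mx mxE.
have mn : (m <= n)%N by rewrite -rL rank_leq_row.
have rK : \rank K = (n - m)%N by rewrite mxrank_ker rL.
have rH : \rank Hm = m.
  rewrite mxrank_ker.
  have -> : h *m K^T = (K *m h)^T by rewrite (trmx_mul K h) hs.
  rewrite mxrank_tr mxrankMfree // rK; lia.
have full : forall (v : 'rV[R]_n), (v <= Hm + K)%MS.
  move=> v; apply: submx_full; rewrite /row_full; apply/eqP.
  have := mxrank_sum_cap Hm K; rewrite cap0' mxrank0 rK rH addn0; lia.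
have bH : forall v : 'rV[R]_n, (v *m proj_mx Hm K <= Hm)%MS.
  by move=> v; apply: proj_mx_sub.
have bL : forall v : 'rV[R]_n, v *m L = (v *m proj_mx Hm K) *m L.
  move=> v; rewrite -{1}(add_proj_mx cap0' (full v)) mulmxDl.
  by rewrite (kerL _ (proj_mx_sub _ _ _)) addr0.
set W := \matrix_i w i.
have WW : W *m h *m W^T = 1%:M.
  by apply/matrixP => i j; rewrite ip_entry !rowK orth mxE.
have rW : \rank W = k.
  apply/eqP; change (row_free W); rewrite -kermx_eq0 -submx0; apply/row_subP => i; rewrite submx0.
  have := row_sub i (kermx W); rewrite sub_kermx => /eqP e.
  by rewrite -[row i _]mulmx1 -WW !mulmxA e !mul0mx.
have : (0 < \rank (W :&: Hm))%N.
  have := mxrank_sum_cap W Hm; have := rank_leq_col (W + Hm)%MS; rewrite rW rH; lia.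
rewrite lt0n mxrank_eq0 => Cn0.
have [i ri] : exists i, row i (W :&: Hm)%MS != 0.
  apply/existsP; apply: contraR Cn0 => /existsPn H.
  by apply/eqP/row_matrixP => i; rewrite row0; exact/eqP/negbNE/H.
set u := row i (W :&: Hm)%MS.
have uW : (u <= W)%MS by exact: submx_trans (row_sub i _) (capmxSl _ _).
have uH : (u <= Hm)%MS by exact: submx_trans (row_sub i _) (capmxSr _ _).
have [x ux] : exists x, u = x *m W by apply/submxP.
set s := ip h u u.
have s0 : 0 < s by apply: hm.2.
have xx : x *m x^T = u *m h *m u^T.
  rewrite ux trmx_mul.
  have -> : x *m W *m h *m (W^T *m x^T) = x *m (W *m h *m W^T) *m x^T by rewrite !mulmxA.
  by rewrite WW mulmx1.
set Bm := W *m proj_mx Hm K.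
have xB : x *m Bm = u by rewrite /Bm mulmxA -ux proj_mx_id.
have -> : \sum_i ip G (w i *m L) (w i *m L) = lam * \tr (Bm *m h *m Bm^T).
  rewrite ip_trace mulr_sumr; apply: eq_bigr => j _.
  rewrite /Bm row_mul rowK bL conf //; apply: horH; exact: bH.
suff : 1 <= \tr (Bm *m h *m Bm^T) by nra.
set D := s *: Bm - x^T *m u.
have D0 : 0 <= \tr (D *m h *m D^T).
  by rewrite ip_trace; apply: sumr_ge0 => j _; exact: ip_ge0.
have DT : D^T = s *: Bm^T - u^T *m x.
  by rewrite /D linearB linearZ /= (trmx_mul x^T u) trmxK.
move: D0; rewrite DT /D.
rewrite !(mulmxBl, mulmxBr) -!scalemxAl -!scalemxAr !raddfB /= !mxtraceZ.
have e1 : u *m h *m u^T = s%:M.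
  by apply/matrixP => a b; rewrite !ord1 [RHS]mxE /s /ip mulr1n.
have t2 : \tr (Bm *m h *m (u^T *m x)) = s.
  rewrite mulmxA (mxtrace_mulC (Bm *m h *m u^T) x).
  rewrite (mulmxA x (Bm *m h) u^T) (mulmxA x Bm h) xB e1 tr11 mxE.
  by rewrite mulr1n.
have t1 : \tr (x^T *m u *m h *m Bm^T) = s.
  rewrite -(mulmxA x^T) -(mulmxA x^T) (mxtrace_mulC x^T).
  rewrite -(mulmxA (u *m h)) -(trmx_mul x Bm) xB e1 tr11 mxE.
  by rewrite mulr1n.
have t3 : \tr (x^T *m u *m h *m (u^T *m x)) = s * s.
  rewrite -(mulmxA x^T) -(mulmxA x^T) (mxtrace_mulC x^T).
  rewrite (mulmxA (u *m h) u^T x) -(mulmxA (u *m h *m u^T) x x^T) xx e1 -scalar_mxM tr11 mxE.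
  by rewrite mulr1n.
rewrite t1 t2 t3 => H.
have s2 : 0 < s * s by apply: mulr_gt0.
nra.
Qed.

End Core.

Theorem mainTheorem15 (R : realType) (N B : Type) (n m : nat)
  (P : N -> B) (dP : N -> 'M[R]_(n, m)) (h : N -> 'M[R]_n) (g : B -> 'M[R]_m)
  (hmet : forall x, metric_mx (h x)) (gmet : forall y, metric_mx (g y))
  (k : nat) (rkP : nat) (hrk : forall x, \rank (dP x) = rkP) :
  strongly_horizontally_conformal P dP h g ->
  (0 < k)%N ->
  (1 <= (k%:Z + rkP%:Z - n%:Z))%R ->
  k_wide k P dP h g.
Proof.
move=> [rk [psi [c [c0 [cle conf]]]]] _ hk.
exists c; split => // x w orth.
have nk : (n < k + m)%N.
  have e : rkP = m by rewrite -(hrk x) rk.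
  move: hk; rewrite e; lia.
apply: le_trans (cle x) _.
have l0 : 0 <= expR (2 * psi x) :> R by exact: ltW (expR_gt0 _).
exact: (core (hmet x) (rk x) nk l0 (conf x) orth).
Qed.
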